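(* Let $\Gamma$ be a group and let $\mathcal{S}$ be a Gr-category of the type $(\Pi,A)$. Then every factor set $(\theta,F)$ on $\Gamma$ with coefficients in $\mathcal{S}$ is cohomologous to an enough strict factor set $(\mu,G)$ on $\Gamma$ with coefficients in $\mathcal{S}$.
   Context: Let $\Pi$ be a group and $A$ a left $\Pi$-module. A Gr-category of the type $(\Pi,A)$, $\mathcal{S}(\Pi,A,\xi)$, has as objects the elements of $\Pi$, only automorphisms as morphisms, $\mathrm{Aut}(x)=\{x\}\times A$, composition $(x,u)\circ(x,v)=(x,u+v)$, tensor $x\otimes y=xy$, $(x,u)\otimes(y,v)=(xy,u+xv)$, associativity constraint $a_{x,y,z}=(xyz,\xi(x,y,z))$ for a normalized 3-cocycle $\xi\in Z^3(\Pi,A)$, and strict unit constraints (unit object $I=1$). A monoidal functor is $F=(F,\widetilde F,\widehat F)$ with $\widetilde F_{x,y}:F(x\otimes y)\to F(x)\otimes F(y)$ and $\widehat F:F(I)\to I$. A factor set on $\Gamma$ with coefficients in $\mathcal{S}$ is a pair $(\theta,F)$: monoidal autoequivalences $F^\sigma:\mathcal{S}\to\mathcal{S}$ ($\sigma\in\Gamma$) and isomorphisms of monoidal functors $\theta^{\sigma,\tau}:F^\sigma F^\tau\to F^{\sigma\tau}$, such that $F^1=\mathrm{id}$, $\theta^{1,\sigma}=\mathrm{id}_{F^\sigma}=\theta^{\sigma,1}$, and $\theta^{\sigma\tau,\gamma}\circ(\theta^{\sigma,\tau}F^\gamma)=\theta^{\sigma,\tau\gamma}\circ(F^\sigma\theta^{\tau,\gamma})$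 for all $\sigma,\tau,\gamma$. A factor set $(\theta,F)$ is enough strict if $\widehat{F^\sigma}=\mathrm{id}_I$ for all $\sigma\in\Gamma$. Two factor sets $(\theta,F)$, $(\mu,G)$ are cohomologous if there is a family of isomorphisms of monoidal functors $u^\sigma:F^\sigma\to G^\sigma$ ($\sigma\in\Gamma$) with $u^1=\mathrm{id}$ and $u^{\sigma\tau}\circ\theta^{\sigma,\tau}=\mu^{\sigma,\tau}\circ(u^\sigma G^\tau)\circ(F^\sigma u^\tau)$ for all $\sigma,\tau\in\Gamma$. *)

(* Defs.v *)
From HB Require Import structures.
From mathcomp Require Import all_boot all_order all_algebra.
Set Implicit Arguments. Unset Strict Implicit. Unset Printing Implicit Defensive.
Import GRing.Theory.
Local Open Scope ring_scope.

Section GrCat.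
Variables (Pi : groupType) (A : zmodType).
Variable act : Pi -> A -> A.

Definition is_module : Prop :=
  [/\ forall x u v, act x (u + v) = act x u + act x v,
      forall u, act 1%g u = u &
      forall x y u, act (x * y)%g u = act x (act y u)].

Definition normalized_3cocycle (xi : Pi -> Pi -> Pi -> A) : Prop :=
  (forall x y z t,
     act x (xi y z t) - xi (x * y)%g z t + xi x (y * z)%g t
     - xi x y (z * t)%g + xi x y z = 0) /\
  (forall x y, xi 1%g x y = 0 /\ xi x 1%g y = 0 /\ xi x y 1%g = 0).

Variable xi : Pi -> Pi -> Pi -> A.

(* In S(Pi,A,xi): a morphism is an automorphism (x,u) of an object x,
   u : A.  Composition (x,u) o (x,v) = (x,u+v); identity (x,0). *)
Definition mcomp (u v : A) : A := u + v.
(* tensor (x,u) (x) (y,v) = (xy, u + x v); only the first object matters *)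
Definition mtens (x : Pi) (u v : A) : A := u + act x v.

(* Data of a (would-be) monoidal functor F = (F, F~, F^) on S:
   fobj = object map, fmor x = action of F on Aut(x) (landing in Aut(F x)),
   ftil x y = F~_{x,y} : F(xy) -> F(x)F(y), fhat = F^ : F(1) -> 1. *)
Record MFdata := MFData {
  fobj : Pi -> Pi;
  fmor : Pi -> A -> A;
  ftil : Pi -> Pi -> A;
  fhat : A }.

(* Axioms of a monoidal functor S -> S (strict unit constraints, associativity
   constraint a_{x,y,z} = (xyz, xi x y z)). *)
Record IsMonFun (F : MFdata) : Prop := {
  mf_comp : forall x u v, fmor F x (mcomp u v) = mcomp (fmor F x u) (fmor F x v);
  mf_id   : forall x, fmor F x 0 = 0;
  (* F~_{x,y} is a morphism F(xy) -> F(x)F(y), F^ a morphism F(1) -> 1 *)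
  mf_objM : forall x y, fobj F (x * y)%g = (fobj F x * fobj F y)%g;
  mf_obj1 : fobj F 1%g = 1%g;
  mf_nat  : forall x y u v,
     mcomp (ftil F x y) (fmor F (x * y)%g (mtens x u v))
     = mcomp (mtens (fobj F x) (fmor F x u) (fmor F y v)) (ftil F x y);
  (* compatibility with associativity:
     a_{Fx,Fy,Fz} o (F~_{x,y} (x) id) o F~_{xy,z}
       = (id (x) F~_{y,z}) o F~_{x,yz} o F(a_{x,y,z}) *)
  mf_assoc : forall x y z,
     mcomp (xi (fobj F x) (fobj F y) (fobj F z))
       (mcomp (mtens (fobj F x * fobj F y)%g (ftil F x y) 0) (ftil F (x * y)%g z))
     = mcomp (mtens (fobj F x) 0 (ftil F y z))
       (mcomp (ftil F x (y * z)%g) (fmor F (x * y * z)%g (xi x y z)));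
  (* compatibility with (strict) unit constraints:
     l_{Fx} o (F^ (x) id) o F~_{1,x} = F(l_x),
     r_{Fx} o (id (x) F^) o F~_{x,1} = F(r_x) *)
  mf_lunit : forall x,
     mcomp 0 (mcomp (mtens 1%g (fhat F) 0) (ftil F 1%g x)) = fmor F (1 * x)%g 0;
  mf_runit : forall x,
     mcomp 0 (mcomp (mtens (fobj F x) 0 (fhat F)) (ftil F x 1%g)) = fmor F (x * 1)%g 0 }.

Definition id_MF : MFdata := MFData (fun x => x) (fun _ u => u) (fun _ _ => 0) 0.

(* composite F G = F o G, with (FG)~ = F~_{Gx,Gy} o F(G~_{x,y}),
   (FG)^ = F^ o F(G^) *)
Definition comp_MF (F G : MFdata) : MFdata :=
  MFData (fun x => fobj F (fobj G x))
         (fun x u => fmor F (fobj G x) (fmor G x u))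
         (fun x y => mcomp (ftil F (fobj G x) (fobj G y))
                           (fmor F (fobj G (x * y)%g) (ftil G x y)))
         (mcomp (fhat F) (fmor F (fobj G 1%g) (fhat G))).

(* alpha : F -> G is a morphism of monoidal functors (components
   alpha_x : F x -> G x).  Every morphism of S is invertible, so such an
   alpha is automatically an isomorphism of monoidal functors. *)
Record IsMonNat (F G : MFdata) (alpha : Pi -> A) : Prop := {
  mn_obj : forall x, fobj F x = fobj G x;
  mn_nat : forall x u, mcomp (alpha x) (fmor F x u) = mcomp (fmor G x u) (alpha x);
  mn_til : forall x y, mcomp (ftil G x y) (alpha (x * y)%g)
                       = mcomp (mtens (fobj F x) (alpha x) (alpha y)) (ftil F x y);
  mn_hat : mcomp (fhat G) (alpha 1%g) = fhat F }.

Definition IsMonAutoEq (F : MFdata) : Prop :=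
  IsMonFun F /\
  exists G : MFdata, IsMonFun G /\
    (exists alpha, IsMonNat (comp_MF G F) id_MF alpha) /\
    (exists beta, IsMonNat (comp_MF F G) id_MF beta).

Variable Gam : groupType.

Definition IsFactorSet (F : Gam -> MFdata) (theta : Gam -> Gam -> Pi -> A) : Prop :=
  [/\ forall s, IsMonAutoEq (F s),
      forall s t, IsMonNat (comp_MF (F s) (F t)) (F (s * t)%g) (theta s t),
      F 1%g = id_MF,
      forall s x, theta 1%g s x = 0 /\ theta s 1%g x = 0 &
      (* theta^{st,g} o (theta^{s,t} F^g) = theta^{s,tg} o (F^s theta^{t,g}) *)
      forall s t g x,
        mcomp (theta (s * t)%g g x) (theta s t (fobj (F g) x))
        = mcomp (theta s (t * g)%g x)
                (fmor (F s) (fobj (F t) (fobj (F g) x)) (theta t g x))].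

Definition enough_strict (F : Gam -> MFdata) : Prop :=
  forall s, fhat (F s) = 0.

Definition cohomologous (F : Gam -> MFdata) (theta : Gam -> Gam -> Pi -> A)
    (G : Gam -> MFdata) (mu : Gam -> Gam -> Pi -> A) : Prop :=
  exists u : Gam -> Pi -> A,
    [/\ forall s, IsMonNat (F s) (G s) (u s),
        forall x, u 1%g x = 0 &
        (* u^{st} o theta^{s,t} = mu^{s,t} o (u^s G^t) o (F^s u^t) *)
        forall s t x,
          mcomp (u (s * t)%g x) (theta s t x)
          = mcomp (mu s t x)
              (mcomp (u s (fobj (G t) x)) (fmor (F s) (fobj (F t) x) (u t x)))].

End GrCat.

(* Main.v *)
Require Import Defs.
From HB Require Import structures.
From mathcomp Require Import all_boot all_order all_algebra.
From Stdlib Require Import FunctionalExtensionality.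
Set Implicit Arguments. Unset Strict Implicit. Unset Printing Implicit Defensive.
Import GRing.Theory.
Local Open Scope ring_scope.
Section ZS.
Variable A : zmodType.
Inductive zt := ZAt of nat | ZAdd of zt & zt | ZOpp of zt | Z0.
Fixpoint zev (env : seq A) (t : zt) : A := match t with
 | ZAt n => nth 0 env n | ZAdd a b => zev env a + zev env b
 | ZOpp a => - zev env a | Z0 => 0 end.
Fixpoint zcf (t : zt) (n : nat) : int := match t with
 | ZAt m => ((m == n) : nat)%:Z | ZAdd a b => zcf a n + zcf b n
 | ZOpp a => - zcf a n | Z0 => 0 end.
Lemma zev_sum env t : zev env t = \sum_(i < size env) env`_i *~ zcf t i.
Proof.
elim: t => [m|a IHa b IHb|a IHa|] /=.
- case: (ltnP m (size env)) => Hm.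
  + rewrite (bigD1 (Ordinal Hm)) //= eqxx mulr1z big1 ?addr0 // => i /negbTE.
    by rewrite -(inj_eq val_inj) /= eq_sym => ->; rewrite mulr0z.
  + rewrite nth_default // big1 // => i _.
    have /negbTE -> : m != i by rewrite neq_ltn (leq_trans (ltn_ord i) Hm) orbT.
    by rewrite mulr0z.
- by rewrite IHa IHb -big_split /=; apply: eq_bigr => i _; rewrite mulrzDr.
- by rewrite IHa -sumrN; apply: eq_bigr => i _; rewrite mulrNz.
- by rewrite big1 // => i _; rewrite mulr0z.
Qed.
Lemma zsolve env (l r : zt) :
  all (fun i => zcf l i == zcf r i) (iota 0 (size env)) -> zev env l = zev env r.
Proof.
move/allP=> H; rewrite !zev_sum; apply: eq_bigr => i _.
by rewrite (eqP (H _ _)) // mem_iota /= add0n.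
Qed.
End ZS.

Ltac zfind x l := match l with
 | ?y :: _ => let _ := constr:(@erefl _ x : x = y) in constr:(0%N)
 | _ :: ?l' => let n := zfind x l' in constr:(n.+1) end.
Ltac zcollect e l := match e with
 | (?a + ?b)%R => let l1 := zcollect a l in zcollect b l1
 | (- ?a)%R => zcollect a l
 | 0%R => l
 | _ => let r := match goal with
                   | _ => let n := zfind e l in constr:(l)
                   | _ => constr:(e :: l) end in r
 end.
Ltac zreify e l := match e with
 | (?a + ?b)%R => let x := zreify a l in let y := zreify b l in constr:(ZAdd x y)
 | (- ?a)%R => let x := zreify a l in constr:(ZOpp x)
 | 0%R => constr:(Z0)
 | _ => let n := zfind e l in constr:(ZAt n) end.
Ltac zmod_solve := match goal with
 | |- ?L = ?R =>
   let T := type of L in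
   let l0 := zcollect L (@nil T) in
   let l1 := zcollect R l0 in
   let tl := zreify L l1 in let tr := zreify R l1 in
   change (@zev _ l1 tl = @zev _ l1 tr); apply: zsolve; vm_compute; reflexivity
 end.


Lemma zuse (A : zmodType) (l1 r1 l r : A) : l1 = r1 -> l + r1 = r + l1 -> l = r.
Proof. by move=> ->; move/addIr. Qed.

Lemma zuseN (A : zmodType) (l1 r1 l r : A) : l1 = r1 -> l + l1 = r + r1 -> l = r.
Proof. by move=> ->; move/addIr. Qed.
Ltac zw1 H := first [apply: (zuse H); zmod_solve | apply: (zuseN H); zmod_solve].
Ltac zw2 H1 H2 := first [apply: (zuse H1); zw1 H2 | apply: (zuseN H1); zw1 H2].
Ltac zw3 H1 H2 H3 := first [apply: (zuse H1); zw2 H2 H3 | apply: (zuseN H1); zw2 H2 H3].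

Section Main.
Variables (Pi : groupType) (A : zmodType) (act : Pi -> A -> A)
  (xi : Pi -> Pi -> Pi -> A).
Hypothesis Hmod : is_module act.

Lemma actD x u v : act x (u + v) = act x u + act x v.
Proof. by case: Hmod. Qed.
Lemma act1 u : act 1%g u = u.
Proof. by case: Hmod. Qed.
Lemma actM x y u : act (x * y)%g u = act x (act y u).
Proof. by case: Hmod. Qed.
Lemma act0 x : act x 0 = 0.
Proof. have H : act x 0 + act x 0 = act x 0 + 0 by rewrite -actD !addr0. exact: (addrI _ H). Qed.
Lemma actN x u : act x (- u) = - act x u.
Proof. by apply/eqP; rewrite -addr_eq0 -actD addNr act0. Qed.

Definition phi (F : MFdata Pi A) u := fmor F 1%g u.

Section MF.
Variable F : MFdata Pi A.
Hypothesis HF : IsMonFun act xi F.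
Lemma fmor_phi x u : fmor F x u = phi F u.
Proof.
have := mf_nat HF 1%g x u 0; rewrite /mcomp /mtens act0 (mf_id HF) act0 !addr0 mul1g.
by rewrite addrC => /addIr.
Qed.
Lemma phiD u v : phi F (u + v) = phi F u + phi F v.
Proof. exact: (mf_comp HF). Qed.
Lemma phi0 : phi F 0 = 0.
Proof. exact: (mf_id HF). Qed.
Lemma phiN u : phi F (- u) = - phi F u.
Proof. by apply/eqP; rewrite -addr_eq0 -phiD addNr phi0. Qed.
Lemma phi_act x u : phi F (act x u) = act (fobj F x) (phi F u).
Proof.
have := mf_nat HF x 1%g 0 u; rewrite /mcomp /mtens mulg1 (mf_id HF) !add0r.
by rewrite !fmor_phi addrC => /addIr.
Qed.
End MF.

Lemma nat_fmor F G a : IsMonNat act F G a -> forall x u, fmor G x u = fmor F x u.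
Proof. by move=> H x u; move: (mn_nat H x u); rewrite /mcomp addrC => /addIr. Qed.

Lemma nat_inv F G a : IsMonNat act F G a -> IsMonNat act G F (fun x => - a x).
Proof.
move=> H; split.
- by move=> x; rewrite (mn_obj H).
- by move=> x u; rewrite /mcomp (nat_fmor H) addrC.
- move=> x y; rewrite /mcomp /mtens -(mn_obj H) actN.
  have T := mn_til H x y; rewrite /mcomp /mtens in T. zw1 T.
- have T := mn_hat H; rewrite /mcomp in T *. zw1 T.
Qed.

Lemma nat_comp F G H a b : IsMonNat act F G a -> IsMonNat act G H b ->
  IsMonNat act F H (fun x => a x + b x).
Proof.
move=> Ha Hb; split.
- by move=> x; rewrite (mn_obj Ha) (mn_obj Hb).
- by move=> x u; rewrite /mcomp (nat_fmor Hb) (nat_fmor Ha) addrC.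
- move=> x y; rewrite /mcomp /mtens actD.
  have T1 := mn_til Ha x y; have T2 := mn_til Hb x y.
  rewrite /mcomp /mtens -(mn_obj Ha) in T1 T2. zw2 T1 T2.
- have T1 := mn_hat Ha; have T2 := mn_hat Hb; rewrite /mcomp in T1 T2 *. zw2 T1 T2.
Qed.

Lemma nat_whiskR F F' G a : IsMonFun act xi G -> IsMonNat act F F' a ->
  IsMonNat act (comp_MF F G) (comp_MF F' G) (fun x => a (fobj G x)).
Proof.
move=> HG Ha; split => /=.
- by move=> x; rewrite (mn_obj Ha).
- by move=> x u; rewrite /mcomp (nat_fmor Ha) addrC.
- move=> x y; rewrite /mcomp /mtens !(nat_fmor Ha) (mf_objM HG).
  have T := mn_til Ha (fobj G x) (fobj G y); rewrite /mcomp /mtens in T. zw1 T.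
- rewrite /mcomp !(nat_fmor Ha) (mf_obj1 HG).
  have T := mn_hat Ha; rewrite /mcomp in T. zw1 T.
Qed.

Lemma nat_whiskL F G G' b : IsMonFun act xi F -> IsMonNat act G G' b ->
  IsMonNat act (comp_MF F G) (comp_MF F G') (fun x => fmor F (fobj G x) (b x)).
Proof.
move=> HF Hb; split => /=.
- by move=> x; rewrite (mn_obj Hb).
- by move=> x u; rewrite /mcomp !(fmor_phi HF) (nat_fmor Hb) addrC.
- move=> x y; rewrite /mcomp /mtens -!(mn_obj Hb) !(fmor_phi HF) -(phi_act HF).
  have T := congr1 (phi F) (mn_til Hb x y); rewrite /mcomp /mtens !(phiD HF) in T. zw1 T.
- rewrite /mcomp !(fmor_phi HF).
  have T := congr1 (phi F) (mn_hat Hb); rewrite /mcomp !(phiD HF) in T. zw1 T.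
Qed.

Definition Gs (F : MFdata Pi A) : MFdata Pi A :=
  MFData (fobj F) (fmor F) (fun x y => ftil F x y + act (fobj F x) (fhat F)) 0.

Lemma Gs_nat F : IsMonFun act xi F -> IsMonNat act F (Gs F) (fun _ => fhat F).
Proof.
move=> HF; split => //=.
- by move=> x u; rewrite /mcomp addrC.
- by move=> x y; rewrite /mcomp /mtens; zmod_solve.
- by rewrite /mcomp add0r.
Qed.

Lemma Gs_fun F : IsMonFun act xi F -> IsMonFun act xi (Gs F).
Proof.
move=> HF; split => /=.
- exact: (mf_comp HF).
- exact: (mf_id HF).
- exact: (mf_objM HF).
- exact: (mf_obj1 HF).
- move=> x y u v; rewrite /mcomp /mtens.
  have T := mf_nat HF x y u v; rewrite /mcomp /mtens in T. zw1 T.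
- move=> x y z; rewrite /mcomp /mtens ?act0 actD -actM -(mf_objM HF).
  have T := mf_assoc HF x y z; rewrite /mcomp /mtens ?act0 in T. zw1 T.
- move=> x; rewrite /mcomp /mtens (mf_obj1 HF) ?act1 ?act0.
  have T := mf_lunit HF x; rewrite /mcomp /mtens ?act1 in T. zw1 T.
- move=> x; rewrite /mcomp /mtens ?act0.
  have T := mf_runit HF x; rewrite /mcomp /mtens in T. zw1 T.
Qed.

Lemma Gs_auto F : IsMonAutoEq act xi F -> IsMonAutoEq act xi (Gs F).
Proof.
case=> HF [H [HH [[al Hal] [be Hbe]]]]; split; first exact: Gs_fun.
exists H; split => //; split.
- eexists; exact: nat_comp (nat_whiskL HH (nat_inv (Gs_nat HF))) Hal.
- eexists; exact: nat_comp (nat_whiskR HH (nat_inv (Gs_nat HF))) Hbe.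
Qed.

End Main.


Theorem lemma3p3 (Gam Pi : groupType) (A : zmodType) (act : Pi -> A -> A)
    (xi : Pi -> Pi -> Pi -> A) :
  is_module act -> normalized_3cocycle act xi ->
  forall (F : Gam -> MFdata Pi A) (theta : Gam -> Gam -> Pi -> A),
    IsFactorSet act xi F theta ->
    exists (G : Gam -> MFdata Pi A) (mu : Gam -> Gam -> Pi -> A),
      IsFactorSet act xi G mu /\ enough_strict G /\ cohomologous act F theta G mu.
Proof.
move=> Hm Hxi F theta [H1 H2 H3 H4 H5].
have HF s : IsMonFun act xi (F s) by case: (H1 s).
have phiM s t u : phi (F s) (phi (F t) u) = phi (F (s * t)%g) u.
  have := mn_nat (H2 s t) 1%g u; rewrite /mcomp /= addrC => /addIr.
  by rewrite !(fmor_phi Hm (HF _)).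
exists (fun s => Gs act (F s)).
exists (fun s t x => ((- fhat (F s) + fmor (F s) (fobj (F t) x) (- fhat (F t)))
                      + theta s t x) + fhat (F (s * t)%g)).
split; [split | split].
- by move=> s; apply: Gs_auto.
- move=> s t.
  have N := (nat_comp Hm (nat_comp Hm (nat_comp Hm
     (nat_whiskR (Gs_fun Hm (HF t)) (nat_inv Hm (Gs_nat (HF s))))
     (nat_whiskL Hm (HF s) (nat_inv Hm (Gs_nat (HF t))))) (H2 s t))
     (Gs_nat (HF (s * t)%g))).
  exact N.
- rewrite /= H3 /Gs /id_MF /=; congr MFData.
  apply: functional_extensionality => x; apply: functional_extensionality => y.
  by rewrite act0 // addr0.
- move=> s x; rewrite H3 /= mul1g mulg1 (H4 s x).1 (H4 s x).2 !oppr0.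
  rewrite (mf_id (HF s)); split; zmod_solve.
- move=> s t g x /=; rewrite /mcomp !(fmor_phi Hm (HF s)) !(fmor_phi Hm (HF t))
     !(fmor_phi Hm (HF (s * t)%g)) !(phiD (HF s)) !(phiN (HF s)) !(phiN (HF t)) !(phiN (HF s)) !(phiN (HF (s * t)%g)) !phiM mulgA.
  have T := H5 s t g x; rewrite /mcomp (fmor_phi Hm (HF s)) in T. zw1 T.
- by move=> s.
- exists (fun s _ => fhat (F s)); split.
  + by move=> s; apply: Gs_nat.
  + by move=> x; rewrite H3.
  + move=> s t x /=; rewrite /mcomp !(fmor_phi Hm (HF s)) (phiN (HF s)); zmod_solve.
Qed.
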